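(* Let $F$ be a field of characteristic different from $2$ and $3$, let $A$ be the free associative $F$-algebra without unity on free generators $x,y$, let $I$ be the two-sided ideal of $A$ generated by the following elements: (i) all monomials of degree $8$; (ii) all monomials of degree greater than $2$ in $x$; (iii) all monic monomials of degree $7$ except $yxy^3xy$ and $y^2xyxy^2$; (iv) all monic monomials of degree less than $7$ which do not divide either of the monomials $yxy^3xy$ and $y^2xyxy^2$; (v) the polynomial $2xy^3xy-5yxyxy^2-2yxy^3x+5y^2xyxy$; (vi) the polynomial $2yxy^3xy-5y^2xyxy^2$; and let $B=A/I$. Then the Lie algebra $[B]$ is $5$-Engel, but the adjoint group $B^\circ$ is not a $5$-Engel group.
   Context: For monic monomials $m,n$ in $x,y$, $m$ divides $n$ if $n=m_1 m m_2$ for some monic monomials $m_1,m_2$ (possibly empty, i.e. equal to $1$). For an associative algebra $B$ (possibly without unity), $[B]$ denotes the Lie algebra with bracket $[a,b]=ab-ba$. The adjoint multiplication on $B$ is $u\circ v=u+v+uv$; $(B,\circ)$ is a monoid with identity $0$, and its group of units is the adjoint group $B^\circ$ (here $B^8=0$, so $B^\circ=B$). Set $[x,{}_{(1)}y]=[x,y]$, $[x,{}_{(k+1)}y]=[[x,{}_{(k)}y],y]$; a Lie algebra $L$ is $n$-Engel if $[u,{}_{(n)}v]=0$ for all $u,v\in L$. For a group, $(x,y)=x^{-1}y^{-1}xy$, $(x,{}_{(k+1)}y)=((x,{}_{(k)}y),y)$; a group $G$ is $n$-Engel if $(u,{}_{(n)}v)=1$ for all $u,v\in G$. *)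

(* Defs.v *)
From HB Require Import structures.
From mathcomp Require Import all_boot all_order all_algebra.
Set Implicit Arguments.
Unset Strict Implicit.
Unset Printing Implicit Defensive.
Import GRing.Theory.
Local Open Scope ring_scope.

(* Words in the free monoid on {x, y}: x is encoded by [false], y by [true].
   Monic monomials of the free non-unital algebra = nonempty words. *)
Notation word := (seq bool).
Definition lx : bool := false.
Definition ly : bool := true.

Section FreeAlg.
Variable F : fieldType.

Definition ncs := word -> F.

Definition ncs_add (p q : ncs) : ncs := fun w => p w + q w.
Definition ncs_opp (p : ncs) : ncs := fun w => - p w.
Definition ncs_scale (a : F) (p : ncs) : ncs := fun w => a * p w.
Definition ncs_zero : ncs := fun _ => 0.
Definition ncs_mul (p q : ncs) : ncs :=
  fun w => \sum_(i < (size w).+1) p (take i w) * q (drop i w).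
Definition ncs_sub (p q : ncs) : ncs := ncs_add p (ncs_opp q).

Definition mono (m : word) : ncs := fun w => (w == m)%:R.

(* Elements of the free associative algebra WITHOUT unity A = F<x,y>_+ :
   finitely supported (equivalently, bounded degree) with zero constant term. *)
Definition in_A (p : ncs) : Prop :=
  p [::] = 0 /\ exists n : nat, forall w : word, (n <= size w)%N -> p w = 0.

Inductive in_ideal (S : ncs -> Prop) : ncs -> Prop :=
  | ideal_gen s : S s -> in_ideal S s
  | ideal_zero : in_ideal S ncs_zero
  | ideal_add p q : in_ideal S p -> in_ideal S q -> in_ideal S (ncs_add p q)
  | ideal_scale a p : in_ideal S p -> in_ideal S (ncs_scale a p)
  | ideal_mull a p : in_A a -> in_ideal S p -> in_ideal S (ncs_mul a p)
  | ideal_mulr p a : in_A a -> in_ideal S p -> in_ideal S (ncs_mul p a).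

Definition mdivides (m n : word) : Prop := exists m1 m2, n = m1 ++ m ++ m2.

Definition w1 : word := [:: ly; lx; ly; ly; ly; lx; ly].
Definition w2 : word := [:: ly; ly; lx; ly; lx; ly; ly].

Definition gen_v : ncs :=
  ncs_add (ncs_add (ncs_scale 2 (mono [:: lx; ly; ly; ly; lx; ly]))
                   (ncs_scale (-5) (mono [:: ly; lx; ly; lx; ly; ly])))
          (ncs_add (ncs_scale (-2) (mono [:: ly; lx; ly; ly; ly; lx]))
                   (ncs_scale 5 (mono [:: ly; ly; lx; ly; lx; ly]))).

Definition gen_vi : ncs :=
  ncs_add (ncs_scale 2 (mono w1)) (ncs_scale (-5) (mono w2)).

Definition gensI (s : ncs) : Prop :=
     (exists m : word, size m = 8%N /\ s = mono m)
  \/ (exists m : word, (2 < count (pred1 lx) m)%N /\ s = mono m)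
  \/ (exists m : word, size m = 7%N /\ m <> w1 /\ m <> w2 /\ s = mono m)
  \/ (exists m : word, (0 < size m < 7)%N /\ ~ mdivides m w1
                        /\ ~ mdivides m w2 /\ s = mono m)
  \/ s = gen_v
  \/ s = gen_vi.

(* Membership in I, and congruence modulo I (equality in B = A/I). *)
Definition inI (p : ncs) : Prop := in_ideal gensI p.
Definition eqI (p q : ncs) : Prop := inI (ncs_sub p q).

Definition lie (p q : ncs) : ncs := ncs_sub (ncs_mul p q) (ncs_mul q p).
Definition lie_engel (u v : ncs) (n : nat) : ncs := iter n (fun c => lie c v) u.

Definition circ (p q : ncs) : ncs := ncs_add (ncs_add p q) (ncs_mul p q).

(* w represents the inverse of u in the adjoint group of B (identity 0). *)
Definition adj_inv_B (u w : ncs) : Prop :=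
  in_A w /\ eqI (circ u w) ncs_zero /\ eqI (circ w u) ncs_zero.

Definition grp_comm_B (u v c : ncs) : Prop :=
  exists u' v', adj_inv_B u u' /\ adj_inv_B v v' /\
    eqI c (circ (circ (circ u' v') u) v).

Definition lie_B_engel (n : nat) : Prop :=
  forall u v : ncs, in_A u -> in_A v -> inI (lie_engel u v n).

Definition adj_group_B_not_engel (n : nat) : Prop :=
  exists (u v : ncs) (c : nat -> ncs),
    in_A u /\ in_A v /\ c 0%N = u /\
    (forall k, (k < n)%N -> in_A (c k.+1) /\ grp_comm_B (c k) v (c k.+1)) /\
    ~ eqI (c n) ncs_zero.

End FreeAlg.

(* Main.v *)
Require Import Defs.
From mathcomp Require Import all_boot all_order all_algebra.
From mathcomp Require Import zify ring.
From Stdlib Require Import FunctionalExtensionality.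
Import GRing.Theory.
Set Implicit Arguments.
Unset Strict Implicit.
Unset Printing Implicit Defensive.
Local Open Scope ring_scope.

Lemma cons_inj (b : bool) : injective (cons b). Proof. by move=> ? ? []. Qed.

Fixpoint wup (n : nat) : seq word :=
  if n is k.+1 then [::] :: [seq b :: w | b <- [:: false; true], w <- wup k]
  else [:: [::]].

Lemma mem_wup n w : (w \in wup n) = (size w <= n)%N.
Proof.
elim: n w => [|n IH] [|b w] //=.
rewrite in_cons /= cats0 mem_cat; case: b.
  have -> : (true :: w \in [seq false :: x | x <- wup n]) = false by apply/mapP => -[x _ []].
  by rewrite (mem_map (@cons_inj true)) IH.
have -> : (false :: w \in [seq true :: x | x <- wup n]) = false by apply/mapP => -[x _ []].
by rewrite (mem_map (@cons_inj false)) IH orbF.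
Qed.

Lemma uniq_wup n : uniq (wup n).
Proof.
elim: n => [|n IH] //=; rewrite cats0 cat_uniq !(map_inj_uniq (@cons_inj _)) IH /=.
apply/and3P; split => //.
- by rewrite mem_cat; apply/norP; split; apply/negP => /mapP [x _].
- by apply/hasP => -[x /mapP [y _ ->] /mapP [z _]].
Qed.

Definition factors (W : word) : seq word :=
  [seq drop i (take j W) | i <- iota 0 8, j <- iota 0 8].

Definition S : seq word :=
  [seq w <- undup (factors w1 ++ factors w2) | w != [::]].

Lemma uniq_S : uniq S.
Proof. by rewrite filter_uniq // undup_uniq. Qed.

Lemma factor_mem (W m l r : word) : size W = 7%N -> W = l ++ m ++ r -> m \in factors W.
Proof.
move=> HW E; have Hin k : (k < 8)%N -> k \in iota 0 8 by rewrite mem_iota.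
apply/allpairsP; exists (size l, (size l + size m)%N); split => /=.
- apply: Hin; move: HW; rewrite E !size_cat; lia.
- apply: Hin; move: HW; rewrite E !size_cat; lia.
- by rewrite E catA take_size_cat ?size_cat // drop_size_cat.
Qed.

Lemma mdiv_S m W : m != [::] -> (W = w1 \/ W = w2) -> mdivides m W -> m \in S.
Proof.
move=> Hm HW [l [r E0]]; rewrite /S mem_filter Hm andTb mem_undup mem_cat.
by case: HW => HW; rewrite HW in E0; rewrite (factor_mem _ E0) ?orbT.
Qed.

Lemma w1S : w1 \in S. Proof. by []. Qed.
Lemma w2S : w2 \in S. Proof. by []. Qed.

Lemma split_ind (F : fieldType) (w a b : word) :
  \sum_(i < (size w).+1) (((take i w == a)%:R : F) * (drop i w == b)%:R)
  = (w == a ++ b)%:R.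
Proof.
case: (w =P a ++ b) => [->|ne].
  have Hi : (size a < (size (a ++ b)).+1)%N by rewrite size_cat; lia.
  rewrite (bigD1 (Ordinal Hi)) //= take_size_cat // drop_size_cat // !eqxx mulr1.
  rewrite big1 ?addr0 // => -[k Hk] Hne /=.
  case: eqP => [Ht|]; last by rewrite mul0r.
  exfalso; move: Hne; apply/negP; rewrite negbK; apply/eqP/val_inj => /=.
  move: Hk (f_equal size Ht); rewrite size_take size_cat.
  case: (ltnP k (size a + size b)) => H1 H2 H3 //.
  by rewrite -H3; apply/eqP; rewrite eqn_leq H1 -ltnS H2.
rewrite big1 // => i _; case: eqP => [Ht|]; last by rewrite mul0r.
case: eqP => [Hd|]; last by rewrite mulr0.
by exfalso; apply: ne; rewrite -Ht -Hd cat_take_drop.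
Qed.

Lemma mono_cat (F : fieldType) (a b : word) :
  mono F (a ++ b) = ncs_mul (mono F a) (mono F b).
Proof. by apply: functional_extensionality => w; rewrite /ncs_mul /mono split_ind. Qed.

Lemma in_A_mono (F : fieldType) m : m != [::] -> in_A (mono F m).
Proof.
move=> Hm; split; first by rewrite /mono eq_sym (negbTE Hm).
exists (size m).+1 => w Hw; rewrite /mono; case: eqP => // E; subst; by rewrite ltnn in Hw.
Qed.

Lemma in_A_mul (F : fieldType) (p q : ncs F) : in_A p -> in_A q -> in_A (ncs_mul p q).
Proof.
move=> [p0 [n Hn]] [q0 [m Hm]]; split.
  by rewrite /ncs_mul big_ord_recl big_ord0 /= p0 mul0r addr0.
exists (n + m)%N => w Hw; rewrite /ncs_mul big1 // => -[k Hk] _ /=.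
case: (ltnP k n) => Hi.
  rewrite (Hm (drop k w)) ?mulr0 // size_drop; lia.
rewrite (Hn (take k w)) ?mul0r // size_take; case: (ltnP k (size w)) => H; lia.
Qed.

Lemma in_A_add (F : fieldType) (p q : ncs F) : in_A p -> in_A q -> in_A (ncs_add p q).
Proof.
move=> [p0 [n Hn]] [q0 [m Hm]]; split; first by rewrite /ncs_add p0 q0 addr0.
by exists (n + m)%N => w Hw; rewrite /ncs_add Hn ?Hm ?addr0 //; lia.
Qed.

Lemma in_A_scale (F : fieldType) a (p : ncs F) : in_A p -> in_A (ncs_scale a p).
Proof.
move=> [p0 [n Hn]]; split; first by rewrite /ncs_scale p0 mulr0.
by exists n => w Hw; rewrite /ncs_scale Hn ?mulr0.
Qed.

Lemma in_A_opp (F : fieldType) (p : ncs F) : in_A p -> in_A (ncs_opp p).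
Proof.
move=> [p0 [n Hn]]; split; first by rewrite /ncs_opp p0 oppr0.
by exists n => w Hw; rewrite /ncs_opp Hn ?oppr0.
Qed.

Lemma in_A_sub (F : fieldType) (p q : ncs F) : in_A p -> in_A q -> in_A (ncs_sub p q).
Proof. by move=> Hp Hq; apply: in_A_add => //; apply: in_A_opp. Qed.

Lemma in_A_zero (F : fieldType) : in_A (ncs_zero F).
Proof. by split => //; exists 0%N. Qed.

Definition nsum (F : fieldType) (s : seq word) (f : word -> ncs F) : ncs F :=
  foldr (fun w acc => ncs_add (f w) acc) (ncs_zero F) s.

Lemma nsumE (F : fieldType) s (f : word -> ncs F) w0 :
  nsum s f w0 = \sum_(w <- s) f w w0.
Proof. by elim: s => [|w s IH]; rewrite ?big_nil ?big_cons //= /ncs_add IH. Qed.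

Lemma nsum_inI (F : fieldType) s (f : word -> ncs F) :
  (forall w, w \in s -> inI (f w)) -> inI (nsum s f).
Proof.
elim: s => [|w s IH] H /=; first exact: ideal_zero.
apply: ideal_add; first by apply: H; rewrite mem_head.
by apply: IH => w' Hw'; apply: H; rewrite in_cons Hw' orbT.
Qed.

Lemma decomp (F : fieldType) (r : ncs F) n :
  (forall w, (n <= size w)%N -> r w = 0) ->
  r = nsum (wup n) (fun w => ncs_scale (r w) (mono F w)).
Proof.
move=> Hn; apply: functional_extensionality => w0; rewrite nsumE /ncs_scale /mono.
under eq_bigr do rewrite eq_sym.
case: (leqP (size w0) n) => H.
  rewrite (bigD1_seq w0) ?uniq_wup ?mem_wup //= eqxx mulr1 big1 ?addr0 //.
  by move=> i /negbTE ->; rewrite mulr0.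
rewrite Hn 1?ltnW // big1_seq // => i /andP [_]; rewrite mem_wup => Hi.
by case: eqP => [E|]; [rewrite -E ltnNge Hi in H | rewrite mulr0].
Qed.

Lemma mono_bad (F : fieldType) m : m != [::] -> m \notin S -> inI (mono F m).
Proof.
move=> Hm HS.
have nd : forall W, (W = w1 \/ W = w2) -> ~ mdivides m W.
  by move=> W HW Hd; move: HS; rewrite (mdiv_S Hm HW Hd).
case: (ltnP (size m) 8) => H8.
  case: (eqVneq (size m) 7) => H7.
    apply: ideal_gen; right; right; left; exists m; split => //; split.
      by move=> E; move: HS; rewrite E w1S.
    by split => // E; move: HS; rewrite E w2S.
  apply: ideal_gen; right; right; right; left; exists m; split.
    by rewrite lt0n size_eq0 Hm /= ltn_neqAle H7 -ltnS H8.
  by split; [apply: nd; left | split => //; apply: nd; right].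
rewrite -(cat_take_drop 8 m).
have Ht : size (take 8 m) = 8%N by rewrite size_take; case: ltnP => // H; apply/eqP; rewrite eqn_leq H8 H.
have G : inI (mono F (take 8 m)).
  by apply: ideal_gen; left; exists (take 8 m).
case: (eqVneq (drop 8 m) [::]) => Hd; first by rewrite Hd cats0.
by rewrite mono_cat; apply: ideal_mulr => //; apply: in_A_mono.
Qed.

Lemma KEY (F : fieldType) (d : ncs F) :
  in_A d -> (forall w, w \in S -> d w = 0) -> inI d.
Proof.
move=> [d0 [n Hn]] HS; rewrite (decomp Hn); apply: nsum_inI => w _.
case: (eqVneq (d w) 0) => Hw.
  have -> : ncs_scale (d w) (mono F w) = ncs_zero F.
    by apply: functional_extensionality => x; rewrite /ncs_scale Hw mul0r.
  exact: ideal_zero.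
apply: ideal_scale; apply: mono_bad.
  by apply/eqP => E; move: Hw; rewrite E d0 eqxx.
by apply/negP => /HS; apply/eqP.
Qed.

Definition mid (W l r : word) : option word :=
  if ((size l + size r <= size W)%N && (take (size l) W == l))
       && (drop (size W - size r) W == r)
  then Some (drop (size l) (take (size W - size r) W)) else None.

Lemma mid_cat W l c r : W = l ++ c ++ r -> mid W l r = Some c.
Proof.
move=> ->; rewrite /mid.
have E : (size (l ++ c ++ r) - size r = size (l ++ c))%N by rewrite !size_cat; lia.
have Hs : (size l + size r <= size (l ++ c ++ r))%N by rewrite !size_cat; lia.
have T1 : take (size l) (l ++ c ++ r) = l by rewrite take_size_cat.
have T2 : drop (size (l ++ c)) (l ++ c ++ r) = r by rewrite catA drop_size_cat.
have T3 : take (size (l ++ c)) (l ++ c ++ r) = l ++ c by rewrite catA take_size_cat.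
by rewrite E Hs T1 T2 T3 !eqxx drop_size_cat.
Qed.

Lemma mid_some W l r c : mid W l r = Some c -> W = l ++ c ++ r.
Proof.
rewrite /mid; case: ifP => // /andP [/andP [Hs /eqP Hl] /eqP Hr] [<-].
have Hn : (size l <= size W - size r)%N by lia.
by rewrite -{1}(cat_take_drop (size W - size r) W)
  -{1}(cat_take_drop (size l) (take (size W - size r) W)) take_takel // Hl Hr catA.
Qed.

Definition PW (F : fieldType) (W : word) (q : ncs F) l r : F :=
  if mid W l r is Some c then q c else 0.

Lemma PW_mull (F : fieldType) W (a q : ncs F) l r U : uniq U ->
  (forall w, (size w <= size W)%N -> w \in U) ->
  PW W (ncs_mul a q) l r = \sum_(u <- U) a u * PW W q (l ++ u) r.
Proof.
move=> HU HUall; rewrite /PW.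
case E: (mid W l r) => [c|]; last first.
  rewrite big1 // => u _; case E2: mid => [d|]; last by rewrite mulr0.
  have := mid_some E2 => H2.
  have : mid W l r = Some (u ++ d) by apply: mid_cat; rewrite H2 -!catA.
  by rewrite E.
have HW := mid_some E.
have Hm : forall u, mid W (l ++ u) r =
    if take (size u) c == u then Some (drop (size u) c) else None.
  move=> u; case: eqP => Hu.
    apply: mid_cat; rewrite HW -catA; congr (l ++ _).
    by rewrite -{1}(cat_take_drop (size u) c) Hu -catA.
  case E2: mid => [d|] //; exfalso; apply: Hu.
  have H2 := mid_some E2.
  have : mid W l r = Some (u ++ d) by apply: mid_cat; rewrite H2 -!catA.
  by rewrite E => -[->]; rewrite take_size_cat.
under eq_bigr => u _ do rewrite Hm (fun_if (fun x => a u * (if x is Some c0 then q c0 else 0))) mulr0.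
rewrite -big_mkcond -big_filter /=.
have Hperm : perm_eq [seq u <- U | take (size u) c == u]
                     [seq take i c | i <- iota 0 (size c).+1].
  apply: uniq_perm; first by rewrite filter_uniq.
    rewrite map_inj_in_uniq ?iota_uniq // => i j; rewrite !mem_iota /= => Hi Hj E3.
    have := f_equal size E3; rewrite !size_takel //; lia.
  move=> u; rewrite mem_filter; apply/andP/mapP => [[/eqP Hu _]|[i Hi ->]].
    exists (size u); last by rewrite Hu.
    rewrite mem_iota add0n ltnS leq0n /=; have H := size_take (size u) c; rewrite Hu in H.
    by move: H; case: ltnP => [/ltnW H0 _ //|_ ->].
  move: Hi; rewrite mem_iota /= add0n ltnS => Hi.
  rewrite size_takel //.
  split => //; apply: HUall; rewrite size_takel //.
  by apply: leq_trans Hi _; rewrite HW !size_cat; lia.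
rewrite (perm_big _ Hperm) big_map /ncs_mul -(big_mkord xpredT (fun i => a (take i c) * q (drop i c))).
apply: eq_big_seq => i; rewrite mem_iota /= => Hi.
by rewrite size_takel //; lia.
Qed.

Lemma PW_mulr (F : fieldType) W (a q : ncs F) l r U : uniq U ->
  (forall w, (size w <= size W)%N -> w \in U) ->
  PW W (ncs_mul q a) l r = \sum_(u <- U) a u * PW W q l (u ++ r).
Proof.
move=> HU HUall; rewrite /PW.
case E: (mid W l r) => [c|]; last first.
  rewrite big1 // => u _; case E2: mid => [d|]; last by rewrite mulr0.
  have := mid_some E2 => H2.
  have : mid W l r = Some (d ++ u) by apply: mid_cat; rewrite H2 -!catA.
  by rewrite E.
have HW := mid_some E.
have Hm : forall u, mid W l (u ++ r) =
    if (size u <= size c)%N && (drop (size c - size u) c == u)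
    then Some (take (size c - size u) c) else None.
  move=> u; case: ifP => [/andP [Hs /eqP Hu]|Hu].
    apply: mid_cat; rewrite HW; congr (l ++ _).
    by rewrite -{1}(cat_take_drop (size c - size u) c) Hu -catA.
  case E2: mid => [d|] //; exfalso; move/negP: Hu; apply.
  have H2 := mid_some E2.
  have : mid W l r = Some (d ++ u) by apply: mid_cat; rewrite H2 -!catA.
  rewrite E => -[->]; rewrite size_cat.
  have -> : (size d + size u - size u = size d)%N by lia.
  by rewrite drop_size_cat // eqxx andbT; lia.
under eq_bigr => u _ do rewrite Hm (fun_if (fun x => a u * (if x is Some c0 then q c0 else 0))) mulr0.
rewrite -big_mkcond -big_filter /=.
have Hperm : perm_eq [seq u <- U | (size u <= size c)%N && (drop (size c - size u) c == u)]
                     [seq drop i c | i <- iota 0 (size c).+1].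
  apply: uniq_perm; first by rewrite filter_uniq.
    rewrite map_inj_in_uniq ?iota_uniq // => i j; rewrite !mem_iota /= => Hi Hj E3.
    have := f_equal size E3; rewrite !size_drop; lia.
  move=> u; rewrite mem_filter; apply/andP/mapP => [[/andP [Hs /eqP Hu] _]|[i Hi ->]].
    exists (size c - size u)%N; last by rewrite Hu.
    by rewrite mem_iota /=; lia.
  move: Hi; rewrite mem_iota /= => Hi.
  rewrite size_drop.
  have -> : (size c - (size c - i) = i)%N by lia.
  split; first by rewrite eqxx andbT; lia.
  apply: HUall; rewrite size_drop; apply: leq_trans (leq_subr _ _) _.
  by rewrite HW !size_cat addnCA leq_addr.
rewrite (perm_big _ Hperm) big_map /ncs_mul -(big_mkord xpredT (fun i => q (take i c) * a (drop i c))).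
apply: eq_big_seq => i; rewrite mem_iota /= => Hi.
rewrite size_drop mulrC.
by have -> : (size c - (size c - i) = i)%N by lia.
Qed.

Definition Tf (F : fieldType) (q : ncs F) l r : F := 5 * PW w1 q l r + 2 * PW w2 q l r.
Definition Good (F : fieldType) (q : ncs F) : Prop := forall l r, Tf q l r = 0.

Lemma U7all w : (size w <= size w1)%N -> w \in wup 7.
Proof. by rewrite mem_wup. Qed.
Lemma U7all2 w : (size w <= size w2)%N -> w \in wup 7.
Proof. by rewrite mem_wup. Qed.

Lemma Good_mull (F : fieldType) (a q : ncs F) : Good q -> Good (ncs_mul a q).
Proof.
move=> Hq l r; rewrite /Tf (PW_mull _ _ _ _ (uniq_wup 7) U7all) (PW_mull _ _ _ _ (uniq_wup 7) U7all2).
rewrite !mulr_sumr -big_split /= big1 // => u _.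
by have := Hq (l ++ u) r; rewrite /Tf => H; rewrite !mulrA ![_ * a u]mulrC -!mulrA -mulrDr H mulr0.
Qed.

Lemma Good_mulr (F : fieldType) (a q : ncs F) : Good q -> Good (ncs_mul q a).
Proof.
move=> Hq l r; rewrite /Tf (PW_mulr _ _ _ _ (uniq_wup 7) U7all) (PW_mulr _ _ _ _ (uniq_wup 7) U7all2).
rewrite !mulr_sumr -big_split /= big1 // => u _.
by have := Hq l (u ++ r); rewrite /Tf => H; rewrite !mulrA ![_ * a u]mulrC -!mulrA -mulrDr H mulr0.
Qed.

Lemma Tf_add (F : fieldType) (p q : ncs F) l r : Tf (ncs_add p q) l r = Tf p l r + Tf q l r.
Proof.
rewrite /Tf /PW /ncs_add.
by case: mid => [c|]; case: mid => [d|]; rewrite ?addr0 ?mulr0 ?mulrDr //; ring.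
Qed.

Lemma Tf_scale (F : fieldType) a (p : ncs F) l r : Tf (ncs_scale a p) l r = a * Tf p l r.
Proof.
rewrite /Tf /PW /ncs_scale.
by case: mid => [c|]; case: mid => [d|]; rewrite ?addr0 ?mulr0 //; ring.
Qed.

Lemma Good_add (F : fieldType) (p q : ncs F) : Good p -> Good q -> Good (ncs_add p q).
Proof. by move=> Hp Hq l r; rewrite Tf_add Hp Hq addr0. Qed.

Lemma Good_scale (F : fieldType) a (p : ncs F) : Good p -> Good (ncs_scale a p).
Proof. by move=> Hp l r; rewrite Tf_scale Hp mulr0. Qed.

Lemma Good_zero (F : fieldType) : Good (ncs_zero F).
Proof. by move=> l r; rewrite /Tf /PW; case: mid => [c|]; case: mid => [d|]; rewrite /ncs_zero ?mulr0 ?addr0. Qed.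

Lemma Good_mono (F : fieldType) m : ~ mdivides m w1 -> ~ mdivides m w2 -> Good (mono F m).
Proof.
move=> H1 H2 l r; rewrite /Tf /PW /mono.
have Z : forall W c, ~ mdivides m W -> mid W l r = Some c -> (c == m) = false.
  move=> W c HW E; case: eqP => // Ec; case: HW; exists l, r; rewrite -Ec.
  exact: mid_some E.
case E1: (mid w1 l r) => [c|]; case E2: (mid w2 l r) => [d|];
  rewrite ?(Z _ _ H1 E1) ?(Z _ _ H2 E2) /= ?mulr0 ?addr0 //.
Qed.

Lemma mid_pre W l r c : size W = 7%N -> mid W l r = Some c ->
  l \in [seq take i W | i <- iota 0 8] /\ r \in [seq drop i W | i <- iota 0 8].
Proof.
move=> HW /mid_some E; have Hin k : (k < 8)%N -> k \in iota 0 8 by rewrite mem_iota.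
split; apply/mapP.
  exists (size l); first by apply: Hin; move: HW; rewrite E !size_cat; lia.
  by rewrite E take_size_cat.
exists (size l + size c)%N; first by apply: Hin; move: HW; rewrite E !size_cat; lia.
by rewrite E catA drop_size_cat // size_cat.
Qed.

Ltac enum_lr :=
  repeat match goal with H : is_true (_ || _) |- _ => case/orP: H => H end;
  repeat match goal with H : is_true (_ == _) |- _ => move/eqP: H => H; subst end.

Lemma Good_fin (F : fieldType) (q : ncs F) :
  (forall l r, (l \in [seq take i w1 | i <- iota 0 8]) -> (r \in [seq drop i w1 | i <- iota 0 8]) -> Tf q l r = 0) ->
  (forall l r, (l \in [seq take i w2 | i <- iota 0 8]) -> (r \in [seq drop i w2 | i <- iota 0 8]) -> Tf q l r = 0) ->
  Good q.
Proof.
move=> H1 H2 l r.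
case E1: (mid w1 l r) => [c|]; first by have [? ?] := mid_pre (erefl : size w1 = 7%N) E1; apply: H1.
case E2: (mid w2 l r) => [d|]; first by have [? ?] := mid_pre (erefl : size w2 = 7%N) E2; apply: H2.
by rewrite /Tf /PW E1 E2 !mulr0 addr0.
Qed.

Lemma Good_gen_v (F : fieldType) : Good (gen_v F).
Proof.
apply: Good_fin => l r; rewrite /= !inE => Hl Hr; enum_lr;
  rewrite /Tf /PW /= /gen_v /ncs_add /ncs_scale /mono /=; ring.
Qed.

Lemma Good_gen_vi (F : fieldType) : Good (gen_vi F).
Proof.
apply: Good_fin => l r; rewrite /= !inE => Hl Hr; enum_lr;
  rewrite /Tf /PW /= /gen_vi /ncs_add /ncs_scale /mono /=; ring.
Qed.

Lemma count_le_factor (m l r : word) :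
  (count (pred1 lx) m <= count (pred1 lx) (l ++ m ++ r))%N.
Proof. by rewrite !count_cat addnCA leq_addr. Qed.

Lemma gens_Good (F : fieldType) (s : ncs F) : gensI s -> Good s.
Proof.
case=> [[m [Hm ->]]|[[m [Hm ->]]|[[m [Hm [H1 [H2 ->]]]]|[[m [_ [H1 [H2 ->]]]]|[->|->]]]]].
- apply: Good_mono => -[l [r E]].
    by have := f_equal size E; rewrite !size_cat Hm /=; lia.
  by have := f_equal size E; rewrite !size_cat Hm /=; lia.
- apply: Good_mono => -[l [r E]]; have := count_le_factor m l r; rewrite -E /=.
    by move=> H; move: (leq_trans Hm H).
  by move=> H; move: (leq_trans Hm H).
- apply: Good_mono => -[l [r E]].
    have := f_equal size E; rewrite !size_cat Hm /= => Hs.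
    have Hl : l = [::] by case: l E Hs => //= ? ? _; lia.
    have Hr : r = [::] by case: r E Hs => //= ? ? _; lia.
    by apply: H1; rewrite E Hl Hr cats0.
  have := f_equal size E; rewrite !size_cat Hm /= => Hs.
  have Hl : l = [::] by case: l E Hs => //= ? ? _; lia.
  have Hr : r = [::] by case: r E Hs => //= ? ? _; lia.
  by apply: H2; rewrite E Hl Hr cats0.
- exact: Good_mono.
- exact: Good_gen_v.
- exact: Good_gen_vi.
Qed.

Lemma inI_Good (F : fieldType) (p : ncs F) : inI p -> Good p.
Proof.
elim=> [s Hs|||a q _ Hq|a q _ _ Hq|q a _ _ Hq].
- exact: gens_Good.
- exact: Good_zero.
- by move=> ? ? _ Hp _ Hq; exact: Good_add.
- exact: Good_scale.
- exact: Good_mull.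
- exact: Good_mulr.
Qed.

Definition cp := seq (word * int).

Definition interp (F : fieldType) (p : cp) : ncs F :=
  fun w => \sum_(e <- p) ((e.1 == w)%:R * (e.2)%:~R).

Definition coefc (w : word) (p : cp) : int :=
  foldr (fun e acc => if e.1 == w then e.2 + acc else acc) 0 p.

Lemma interp_coef (F : fieldType) p w : interp F p w = (coefc w p)%:~R.
Proof.
elim: p => [|e p IH]; first by rewrite /interp big_nil.
rewrite /interp big_cons -/(interp F p w) IH /=.
by case: eqP => _; rewrite ?intrD ?mul1r ?mul0r ?add0r.
Qed.

Definition pmul (p q : cp) : cp := [seq (a.1 ++ b.1, a.2 * b.2) | a <- p, b <- q].
Definition circL (p q : cp) : cp := p ++ q ++ pmul p q.
Definition tr (p : cp) : cp := [seq (w, coefc w p) | w <- S].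
Definition ne (p : cp) : bool := all (fun e => e.1 != [::]) p.
Definition allz (p : cp) : bool := all (fun e => e.2 == 0) p.

Lemma interp_cat (F : fieldType) p q : interp F (p ++ q) = ncs_add (interp F p) (interp F q).
Proof. by apply: functional_extensionality => w; rewrite /interp big_cat. Qed.

Lemma interp_mul (F : fieldType) p q : interp F (pmul p q) = ncs_mul (interp F p) (interp F q).
Proof.
apply: functional_extensionality => w; rewrite /interp /ncs_mul big_allpairs_dep /=; symmetry.
under eq_bigr => i _ do rewrite mulr_suml.
transitivity (\sum_(i < (size w).+1) \sum_(a <- p) \sum_(b <- q)
   ((a.1 == take i w)%:R * a.2%:~R * ((b.1 == drop i w)%:R * b.2%:~R)) : F).
  by apply: eq_bigr => i _; apply: eq_bigr => a _; rewrite mulr_sumr.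
rewrite exchange_big /=; apply: eq_bigr => a _.
rewrite exchange_big /=; apply: eq_bigr => b _.
rewrite intrM.
transitivity ((\sum_(i < (size w).+1) ((take i w == a.1)%:R * (drop i w == b.1)%:R)) * (a.2%:~R * b.2%:~R : F)).
  by rewrite mulr_suml; apply: eq_bigr => i _; rewrite ![(_ == take _ _)]eq_sym ![(_ == drop _ _)]eq_sym; ring.
by rewrite split_ind eq_sym.
Qed.

Lemma interp_circ (F : fieldType) p q : interp F (circL p q) = circ (interp F p) (interp F q).
Proof. by rewrite /circL !interp_cat interp_mul /circ; apply: functional_extensionality => w; rewrite /ncs_add addrA. Qed.

Lemma interp_tr (F : fieldType) p w : interp F (tr p) w = if w \in S then interp F p w else 0.
Proof.
rewrite /interp /tr big_map /=.
case: ifP => Hw.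
  rewrite (bigD1_seq w) ?uniq_S //= eqxx mul1r big1 ?addr0; last first.
    by move=> i /negbTE ->; rewrite mul0r.
  by rewrite -interp_coef.
by rewrite big1_seq // => i /andP [_ Hi]; case: eqP => [E|]; [rewrite -E Hi in Hw | rewrite mul0r].
Qed.

Lemma interp_nil (F : fieldType) p : ne p -> interp F p [::] = 0.
Proof.
move=> Hp; rewrite /interp big1_seq // => e /andP [_ He].
by move/allP: Hp => /(_ e He) /negbTE ->; rewrite mul0r.
Qed.

Lemma in_A_interp (F : fieldType) p : ne p -> in_A (interp F p).
Proof.
move=> Hp; split; first exact: interp_nil.
exists (\max_(e <- p) size e.1).+1 => w Hw; rewrite /interp big1_seq // => e /andP [_ He].
case: eqP => [E|]; last by rewrite mul0r.
have : (size e.1 <= \max_(e <- p) size e.1)%N by rewrite (bigmax_sup_seq _ He).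
by rewrite E => H; have := leq_trans Hw H; rewrite ltnn.
Qed.

Lemma ne_tr p : ne (tr p).
Proof. by rewrite /ne /tr all_map; apply/allP => w /=; rewrite /S mem_filter => /andP []. Qed.

Lemma ne_cat p q : ne p -> ne q -> ne (p ++ q).
Proof. by rewrite /ne all_cat => -> ->. Qed.

Lemma ne_pmul p q : ne p -> ne (pmul p q).
Proof.
move=> /allP Hp; apply/allP => e /allpairsP [[a b] [Ha _ ->]] /=.
by rewrite -size_eq0 size_cat -lt0n addn_gt0 lt0n size_eq0 Hp.
Qed.

Lemma ne_circ p q : ne p -> ne q -> ne (circL p q).
Proof. by move=> Hp Hq; rewrite /circL !ne_cat // ne_pmul. Qed.

Lemma allz_interp (F : fieldType) p : allz p -> interp F p = ncs_zero F.
Proof.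
move=> /allP Hp; apply: functional_extensionality => w; rewrite /interp big1_seq // => e /andP [_ He].
by rewrite (eqP (Hp e He)) mulr0.
Qed.

Lemma eqI_refl (F : fieldType) (p : ncs F) : eqI p p.
Proof.
rewrite /eqI; have -> : ncs_sub p p = ncs_zero F.
  by apply: functional_extensionality => w; rewrite /ncs_sub /ncs_add /ncs_opp subrr.
exact: ideal_zero.
Qed.

Lemma eqI_sym (F : fieldType) (p q : ncs F) : eqI p q -> eqI q p.
Proof.
rewrite /eqI => H; have -> : ncs_sub q p = ncs_scale (-1) (ncs_sub p q).
  by apply: functional_extensionality => w; rewrite /ncs_sub /ncs_add /ncs_opp /ncs_scale; ring.
exact: ideal_scale.
Qed.

Lemma eqI_trans (F : fieldType) (p q r : ncs F) : eqI p q -> eqI q r -> eqI p r.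
Proof.
rewrite /eqI => H1 H2; have -> : ncs_sub p r = ncs_add (ncs_sub p q) (ncs_sub q r).
  by apply: functional_extensionality => w; rewrite /ncs_sub /ncs_add /ncs_opp; ring.
exact: ideal_add.
Qed.

Lemma eqI_circ (F : fieldType) (a a' b : ncs F) : in_A b -> eqI a a' -> eqI (circ a b) (circ a' b).
Proof.
rewrite /eqI => Hb H.
have -> : ncs_sub (circ a b) (circ a' b) = ncs_add (ncs_sub a a') (ncs_mul (ncs_sub a a') b).
  apply: functional_extensionality => w; rewrite /ncs_sub /ncs_add /ncs_opp /circ /ncs_mul /ncs_add.
  have -> : \sum_(i < (size w).+1) (a (take i w) + - a' (take i w)) * b (drop i w) =
            \sum_(i < (size w).+1) a (take i w) * b (drop i w) - \sum_(i < (size w).+1) (a' (take i w) * b (drop i w)).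
    by rewrite -sumrN -big_split; apply: eq_bigr => i _ /=; ring.
  ring.
apply: ideal_add => //; exact: ideal_mulr.
Qed.

Lemma eqI_tr (F : fieldType) p : ne p -> eqI (interp F (tr p)) (interp F p).
Proof.
move=> Hp; apply: KEY.
  by apply: in_A_sub; apply: in_A_interp => //; apply: ne_tr.
by move=> w Hw; rewrite /ncs_sub /ncs_add /ncs_opp interp_tr Hw subrr.
Qed.

Definition pscale (c : int) (p : cp) : cp := [seq (e.1, c * e.2) | e <- p].

Fixpoint pows (n : nat) (m pw : cp) : cp :=
  if n is k.+1 then let pw' := tr (pmul pw m) in tr (pw ++ pows k m pw') else tr pw.

Definition invL (C : cp) : cp := let m := tr (pscale (-1) C) in pows 6 m m.

Definition Xl : cp := [:: ([:: lx], 1)].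
Definition Yl : cp := [:: ([:: ly], 1)].

Definition stepL (C : cp) : cp :=
  tr (circL (tr (circL (tr (circL (invL C) (invL Yl))) C)) Yl).

Definition clist (k : nat) : cp := iter k stepL Xl.

Definition chk (C : cp) : bool :=
  allz (tr (circL C (invL C))) && allz (tr (circL (invL C) C)).


Lemma ne_invL C : ne (invL C).
Proof. by rewrite /invL; case: (6%N) => [|n] /=; apply: ne_tr. Qed.

Lemma eqI_zero_tr (F : fieldType) p : ne p -> allz (tr p) -> eqI (interp F p) (ncs_zero F).
Proof.
move=> Hp Hz; apply: eqI_trans (eqI_sym (eqI_tr F Hp)) _.
rewrite (allz_interp F Hz); exact: eqI_refl.
Qed.

Lemma adj_ok (F : fieldType) C : ne C -> chk C -> adj_inv_B (interp F C) (interp F (invL C)).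
Proof.
move=> HC /andP [H1 H2]; split; first by apply: in_A_interp; apply: ne_invL.
split; rewrite -interp_circ; apply: eqI_zero_tr => //; apply: ne_circ => //; exact: ne_invL.
Qed.

Lemma step_ok (F : fieldType) C : ne C -> chk C ->
  grp_comm_B (interp F C) (interp F Yl) (interp F (stepL C)).
Proof.
move=> HC Hchk; exists (interp F (invL C)), (interp F (invL Yl)).
split; first exact: adj_ok.
split; first by apply: adj_ok => //; vm_compute.
have nU := ne_invL C; have nV := ne_invL Yl.
have nY : ne Yl by [].
have iC : in_A (interp F C) by apply: in_A_interp.
have iY : in_A (interp F Yl) by apply: in_A_interp.
set A1 := circL (invL C) (invL Yl).
have n1 : ne A1 by apply: ne_circ.
have E1 : eqI (interp F (tr A1)) (circ (interp F (invL C)) (interp F (invL Yl))).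
  by rewrite -interp_circ; apply: eqI_tr.
set A2 := circL (tr A1) C.
have n2 : ne A2 by apply: ne_circ => //; apply: ne_tr.
have E2 : eqI (interp F (tr A2)) (circ (circ (interp F (invL C)) (interp F (invL Yl))) (interp F C)).
  apply: eqI_trans (eqI_tr F n2) _; rewrite /A2 interp_circ.
  exact: eqI_circ.
set A3 := circL (tr A2) Yl.
have n3 : ne A3 by apply: ne_circ => //; apply: ne_tr.
rewrite /stepL -/A1 -/A2 -/A3.
apply: eqI_trans (eqI_tr F n3) _; rewrite /A3 interp_circ.
exact: eqI_circ.
Qed.

Lemma chk_clist k : (k < 5)%N -> chk (clist k).
Proof. case: k => [|[|[|[|[|k]]]]] H; [| | | | | by []]; vm_compute; reflexivity. Qed.

Lemma ne_clist k : ne (clist k).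
Proof. case: k => [|k]; first by []. by rewrite /clist iterS; apply: ne_tr. Qed.

Lemma part2 (F : fieldType) : (2%N \notin [pchar F]) -> (3%N \notin [pchar F]) ->
  adj_group_B_not_engel F 5.
Proof.
move=> H2 H3.
exists (interp F Xl), (interp F Yl), (fun k => interp F (clist k)).
split; first by apply: in_A_interp.
split; first by apply: in_A_interp.
split => //.
split.
  move=> k Hk; split; first by apply: in_A_interp; apply: ne_clist.
  by rewrite /= -/(clist k) ; apply: step_ok; [apply: ne_clist | apply: chk_clist].
move=> /inI_Good /(_ [::] [::]); rewrite /Tf /PW /= /ncs_sub /ncs_add /ncs_opp /ncs_zero.
rewrite !interp_coef.
have -> : coefc w1 (clist 5) = 0%Z by vm_compute.
have -> : coefc w2 (clist 5) = 6%Z by vm_compute.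
have n2 : (2%:R : F) != 0.
  by move: H2; rewrite inE /= => /negP H; apply/negP => H'; apply: H; rewrite H'.
have n3 : (3%:R : F) != 0.
  by move: H3; rewrite inE /= => /negP H; apply/negP => H'; apply: H; rewrite H'.
have : (2%:R * 2%:R * 3%:R : F) != 0 by rewrite !mulf_neq0.
have E0 : ((0%Z)%:~R : F) = 0 by [].
have E6 : ((6%Z)%:~R : F) = 6 by [].
rewrite E0 E6 => Hn E; move/eqP: Hn; apply; rewrite -E; ring.
Qed.

#[local] Arguments lie_engel : simpl never.

Lemma LE (F : fieldType) (u v : ncs F) k w :
  lie_engel u v k.+1 w = \sum_(i < (size w).+1)
     (lie_engel u v k (take i w) * v (drop i w) - v (take i w) * lie_engel u v k (drop i w)).
Proof. by rewrite /lie_engel iterS /lie /ncs_sub /ncs_add /ncs_opp /ncs_mul -sumrB. Qed.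

Lemma LE0 (F : fieldType) (u v : ncs F) w : lie_engel u v 0 w = u w.
Proof. by []. Qed.

Lemma ord_mul (F : fieldType) (p q : ncs F) n m :
  (forall w, (size w < n)%N -> p w = 0) -> (forall w, (size w < m)%N -> q w = 0) ->
  forall w, (size w < n + m)%N -> ncs_mul p q w = 0.
Proof.
move=> Hp Hq w Hw; rewrite /ncs_mul big1 // => -[k Hk] _ /=.
case: (ltnP k n) => Hi.
  by rewrite Hp ?mul0r // size_take; case: (ltnP k (size w)) => H //; exact: leq_ltn_trans H Hi.
by rewrite Hq ?mulr0 // size_drop; lia.
Qed.

Lemma Ord (F : fieldType) (u v : ncs F) : in_A u -> in_A v ->
  forall k w, (size w <= k)%N -> lie_engel u v k w = 0.
Proof.
move=> [u0 _] [v0 _]; elim=> [|k IH] w Hw.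
  by rewrite LE0; case: w Hw.
rewrite /lie_engel iterS -/(lie_engel u v k) /lie /ncs_sub /ncs_add /ncs_opp.
have Hv : forall w, (size w < 1)%N -> v w = 0 by case.
rewrite (ord_mul (n := k.+1) (m := 1) IH Hv) ?addn1 //.
rewrite (ord_mul (n := 1) (m := k.+1) Hv IH) ?oppr0 ?addr0 //.
Qed.

Lemma in_A_LE (F : fieldType) (u v : ncs F) k : in_A u -> in_A v -> in_A (lie_engel u v k).
Proof.
move=> Hu Hv; elim: k => [|k IH] //.
by rewrite /lie_engel iterS -/(lie_engel u v k); apply: in_A_sub; apply: in_A_mul.
Qed.

Lemma sum_win (F : fieldType) n (P : pred nat) (f : nat -> F) :
  (forall i, (i <= n)%N -> ~~ P i -> f i = 0) ->
  \sum_(i < n.+1) f i = \sum_(i <- [seq i <- iota 0 n.+1 | P i]) f i.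
Proof.
move=> H; rewrite big_filter -(big_mkord xpredT) /index_iota subn0 (big_mkcond P).
apply: eq_big_seq => i; rewrite mem_iota add0n ltnS => /andP [_ Hi].
by case: ifP => // /negbT /(H i Hi).
Qed.

Lemma lie_win (F : fieldType) (u v : ncs F) : in_A u -> in_A v -> forall k w,
  lie_engel u v k.+1 w =
    \sum_(i <- [seq i <- iota 0 (size w).+1 | (k < i < size w)%N])
        (lie_engel u v k (take i w) * v (drop i w))
  - \sum_(i <- [seq i <- iota 0 (size w).+1 | (0 < i < size w - k)%N])
        (v (take i w) * lie_engel u v k (drop i w)).
Proof.
move=> Hu Hv k w; have v0 : v [::] = 0 by case: Hv.
rewrite LE sumrB; congr (_ - _); apply: sum_win => i Hi /negP HP.
  case: (leqP i k) => H1.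
    by rewrite Ord ?mul0r // size_take; case: (ltnP i (size w)) => H2 //; exact: leq_trans H2 H1.
  have -> : i = size w by apply/eqP; rewrite eqn_leq Hi /= leqNgt; apply/negP => H3; apply: HP; rewrite H1 H3.
  by rewrite drop_size v0 mulr0.
case: (eqVneq i 0) => [->|Hi0]; first by rewrite take0 v0 mul0r.
rewrite Ord ?mulr0 // size_drop leqNgt; apply/negP => H3; apply: HP.
rewrite lt0n Hi0 /=; move: H3 Hi; move: (size w) => n; lia.
Qed.


Ltac expand Hu Hv :=
  repeat (rewrite (lie_win Hu Hv) /= ?big_cons ?big_nil);
  rewrite ?LE0.

Lemma S_eq : S = [:: [:: ly; lx; ly; ly; ly];
   [:: ly; lx; ly; ly; ly; lx];
   [:: ly; lx; ly; ly; ly; lx; ly];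
   [:: lx; ly; ly; ly];
   [:: lx; ly; ly; ly; lx];
   [:: lx; ly; ly; ly; lx; ly];
   [:: ly; ly; ly];
   [:: ly; ly; ly; lx];
   [:: ly; ly; ly; lx; ly];
   [:: ly; ly; lx];
   [:: ly; ly; lx; ly];
   [:: ly; ly; lx; ly; lx];
   [:: ly; ly; lx; ly; lx; ly];
   [:: ly; ly; lx; ly; lx; ly; ly];
   [:: ly; lx; ly; lx];
   [:: ly; lx; ly; lx; ly];
   [:: ly; lx; ly; lx; ly; ly];
   [:: lx; ly; lx];
   [:: lx; ly; lx; ly];
   [:: lx; ly; lx; ly; ly];
   [:: ly; lx];
   [:: ly; lx; ly];
   [:: ly; lx; ly; ly];
   [:: lx];
   [:: lx; ly];
   [:: lx; ly; ly];
   [:: ly; ly];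
   [:: ly]].
Proof. by vm_compute. Qed.

Lemma in_A_gen_v (F : fieldType) : in_A (gen_v F).
Proof. by rewrite /gen_v; do 2 apply: in_A_add; apply: in_A_scale; apply: in_A_mono. Qed.

Lemma in_A_gen_vi (F : fieldType) : in_A (gen_vi F).
Proof. by rewrite /gen_vi; apply: in_A_add; apply: in_A_scale; apply: in_A_mono. Qed.

Ltac enum_w :=
  repeat match goal with H : is_true (_ || _) |- _ => case/orP: H => H end;
  repeat match goal with H : is_true (_ == _) |- _ => move/eqP: H => H; subst end.

Lemma part1 (F : fieldType) : lie_B_engel F 5.
Proof.
move=> u v Hu Hv.
pose al : F := 3 * (u [:: lx] * v [:: lx] * v [:: ly] ^+ 4 - u [:: ly] * v [:: lx] ^+ 2 * v [:: ly] ^+ 3).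
pose be : F := 3 * (u [:: ly] * v [:: lx] * v [:: ly]^+3 * (v [:: lx; ly] - v [:: ly; lx])
                 + v [:: lx] * v [:: ly] ^+ 4 * (u [:: ly; lx] - u [:: lx; ly])).
pose R := ncs_add (ncs_scale al (gen_v F)) (ncs_scale be (gen_vi F)).
have HR : inI R.
  apply: ideal_add; apply: ideal_scale; apply: ideal_gen.
    by right; right; right; right; left.
  by right; right; right; right; right.
have HA : in_A R by apply: in_A_add; apply: in_A_scale; [apply: in_A_gen_v | apply: in_A_gen_vi].
have -> : lie_engel u v 5 = ncs_add (ncs_sub (lie_engel u v 5) R) R.
  by apply: functional_extensionality => w; rewrite /ncs_sub /ncs_add /ncs_opp addrNK.
apply: ideal_add => //; apply: KEY; first by apply: in_A_sub => //; apply: in_A_LE.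
move=> w; rewrite S_eq !inE => Hw; enum_w;
  rewrite /ncs_sub /ncs_add /ncs_opp /R /ncs_add /ncs_scale /gen_v /gen_vi /ncs_add /ncs_scale /mono /=;
  first [ rewrite (Ord (k:=5) Hu Hv) //; rewrite /al /be; ring
        | expand Hu Hv; rewrite /al /be; ring ].
Qed.


Local Close Scope ring_scope.

Theorem theorem1p2 (F : fieldType) :
  (2%N \notin [pchar F]%R) -> (3%N \notin [pchar F]%R) ->
  lie_B_engel F 5 /\ adj_group_B_not_engel F 5.
Proof.
move=> H2 H3; split; [exact: part1 | exact: part2].
Qed.
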